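(* Quaternary Hermitian formally self-dual LCD codes with parameters $[32s,16s,6]_4$, $[40s,20s,7]_4$ and $[48s,24s,8]_4$ exist for every integer $s\ge1$.
   Context: Over $\mathbb{F}_4$ the Hermitian inner product is $(\mathbf{x},\mathbf{y})_H=\sum_i x_iy_i^{2}$, with dual $\mathcal{C}^{\perp_H}$. A code is Hermitian LCD if $\mathcal{C}\cap\mathcal{C}^{\perp_H}=\{0\}$, and Hermitian formally self-dual if it has the same weight distribution as $\mathcal{C}^{\perp_H}$. $[n,k,d]_4$ denotes length $n$, dimension $k$, minimum distance $d$. *)

(* Defs.v *)
(* Codes over F_4: F is any finite field with 4 elements
   (unique up to isomorphism); a linear [n,k] code is a k-dimensional
   subspace of the row space 'rV[F]_n. *)
From HB Require Import structures.
From mathcomp Require Import all_boot all_order all_algebra all_field.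
Set Implicit Arguments. Unset Strict Implicit. Unset Printing Implicit Defensive.
Import GRing.Theory.
Local Open Scope ring_scope.

Section Codes.
Variables (F : finFieldType) (n : nat).

Definition wt (x : 'rV[F]_n) : nat := #|[set i : 'I_n | x 0 i != 0]|.

Definition herm (x y : 'rV[F]_n) : F := \sum_(i < n) x 0 i * (y 0 i) ^+ 2.

Definition herm_dual (C : {vspace 'rV[F]_n}) : {set 'rV[F]_n} :=
  [set y | [forall x, (x \in C) ==> (herm x y == 0)]].

Definition herm_LCD (C : {vspace 'rV[F]_n}) : Prop :=
  forall y, y \in C -> y \in herm_dual C -> y = 0.

Definition herm_formally_self_dual (C : {vspace 'rV[F]_n}) : Prop :=
  forall w : nat,
    #|[set x : 'rV[F]_n | (x \in C) && (wt x == w)]| =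
    #|[set y in herm_dual C | wt y == w]|.

(* minimum distance of a linear code = minimum nonzero weight *)
Definition min_dist_is (C : {vspace 'rV[F]_n}) (d : nat) : Prop :=
  (exists2 x, x \in C & (x != 0) /\ wt x = d) /\
  (forall x, x \in C -> x != 0 -> (d <= wt x)%N).

Definition herm_fsd_LCD_code (C : {vspace 'rV[F]_n}) (k d : nat) : Prop :=
  \dim C = k /\ min_dist_is C d /\ herm_LCD C /\ herm_formally_self_dual C.

End Codes.

(* Main.v *)
From HB Require Import structures.
Require Import Defs.
From mathcomp Require Import all_boot all_order all_algebra all_field.
From mathcomp Require Import ring zify.
Set Implicit Arguments. Unset Strict Implicit. Unset Printing Implicit Defensive.
Import GRing.Theory.
Definition n3 (b : nat) : nat := match b with 0 => 0 | 1 => 1 | 2 => 2 | _ => 3 end.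
Definition add4 (a b : nat) : nat :=
  match a with
  | 0 => n3 b
  | 1 => match b with 0 => 1 | 1 => 0 | 2 => 3 | _ => 2 end
  | 2 => match b with 0 => 2 | 1 => 3 | 2 => 0 | _ => 1 end
  | _ => match b with 0 => 3 | 1 => 2 | 2 => 1 | _ => 0 end
  end.
Definition mul4 (a b : nat) : nat :=
  match a with
  | 0 => 0
  | 1 => n3 b
  | 2 => match b with 0 => 0 | 1 => 2 | 2 => 3 | _ => 1 end
  | _ => match b with 0 => 0 | 1 => 3 | 2 => 1 | _ => 2 end
  end.
Definition nz (a : nat) : bool := a != 0.
Definition ent (L : seq (seq nat)) (i j : nat) : nat := nth 0 (nth [::] L i) j.
Definition dot (k : nat) (f g : nat -> nat) : nat :=
  foldr (fun i acc => add4 (mul4 (f i) (g i)) acc) 0 (iota 0 k).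
Definition vmul (k : nat) (l : seq nat) (L : seq (seq nat)) : seq nat :=
  mkseq (fun j => dot k (nth 0 l) (fun i => ent L i j)) k.
Definition mmul (k : nat) (L M : seq (seq nat)) : seq (seq nat) :=
  mkseq (fun i => vmul k (nth [::] L i) M) k.
Definition madd (k : nat) (L M : seq (seq nat)) : seq (seq nat) :=
  mkseq (fun i => mkseq (fun j => add4 (ent L i j) (ent M i j)) k) k.
Definition mI (k : nat) : seq (seq nat) :=
  mkseq (fun i => mkseq (fun j => if i == j then 1 else 0) k) k.
Fixpoint enumw (k r : nat) : seq (seq nat) :=
  match k with
  | 0 => [:: [::]]
  | k'.+1 => [seq 0 :: l | l <- enumw k' r] ++
      match r with 0 => [::] | r'.+1 => [seq a :: l | a <- [:: 1; 2; 3], l <- enumw k' r'] end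
  end.
Definition chk (k d : nat) (L : seq (seq nat)) (l : seq nat) : bool :=
  (count nz l == 0) || (d <= count nz l + count nz (vmul k l L)).
Definition hchk (k : nat) (L : seq (seq nat)) : bool :=
  all (fun i => all (fun j => ent L j i == mul4 (ent L i j) (ent L i j)) (iota 0 k)) (iota 0 k).
Definition allchk (k d r : nat) (A B C : seq (seq nat)) (w : seq nat) : bool :=
  [&& d <= 2 * r.+1, hchk k A, mmul k A B == mI k,
      mmul k (madd k (mmul k A A) (mI k)) C == mI k,
      size w == k, count nz w != 0, count nz w + count nz (vmul k w A) == d,
      all (chk k d A) (enumw k r) & all (chk k d B) (enumw k r)].
Local Open Scope ring_scope.

Section General.
Variable F : finFieldType.
Hypothesis F2 : (2 \in [pchar F])%N.
Hypothesis HF : #|F| = 4%N.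

Lemma x4 (x : F) : x ^+ 4 = x.
Proof. by rewrite -{2}(expf_card x) HF. Qed.

Lemma sqrD (x y : F) : (x + y) ^+ 2 = x ^+ 2 + y ^+ 2.
Proof. by rewrite -!(pFrobenius_autE F2) rmorphD. Qed.

Lemma sq_sum (I : finType) (E : I -> F) : (\sum_i E i) ^+ 2 = \sum_i (E i) ^+ 2.
Proof.
rewrite -(pFrobenius_autE F2) rmorph_sum; apply: eq_bigr => i _.
by [].
Qed.

Definition hsym K (A : 'M[F]_K) := forall i j, A j i = A i j ^+ 2.
Definition lcdc K (A : 'M[F]_K) := forall m : 'rV_K, m *m A *m A = m -> m = 0.
Definition dlb K d (A : 'M[F]_K) := forall m : 'rV_K, m != 0 -> (d <= wt m + wt (m *m A))%N.
Definition dex K d (A : 'M[F]_K) := exists2 m : 'rV_K, m != 0 & (wt m + wt (m *m A))%N = d.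

Lemma wt_row n1 n2 (a : 'rV[F]_n1) (b : 'rV[F]_n2) : wt (row_mx a b) = (wt a + wt b)%N.
Proof.
rewrite /wt -!sum1dep_card big_split_ord /=.
by congr (_ + _)%N; apply: eq_bigl => i; rewrite ?row_mxEl ?row_mxEr.
Qed.

Lemma wt0 n : wt (0 : 'rV[F]_n) = 0%N.
Proof. by rewrite /wt -sum1dep_card big1 // => i; rewrite mxE eqxx. Qed.

Lemma wt_eq0 n (x : 'rV[F]_n) : wt x = 0%N -> x = 0.
Proof.
move=> /eqP; rewrite /wt cards_eq0 => /eqP h; apply/rowP => i.
apply/eqP; move/setP: h => /(_ i); rewrite !inE mxE => /negbFE; done.
Qed.

Definition swap K (x : 'rV[F]_(K + K)) : 'rV[F]_(K + K) := row_mx (rsubmx x) (lsubmx x).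

Lemma swapK K : involutive (@swap K).
Proof. by move=> x; rewrite /swap row_mxKl row_mxKr hsubmxK. Qed.

Lemma wt_swap K (x : 'rV[F]_(K + K)) : wt (swap x) = wt x.
Proof. by rewrite /swap wt_row -{3}(hsubmxK x) wt_row addnC. Qed.

Lemma herm_row K (A : 'M[F]_K) (u a b : 'rV[F]_K) : hsym A ->
  herm (row_mx u (u *m A)) (row_mx a b) = \sum_i u 0 i * (a 0 i + (b *m A) 0 i) ^+ 2.
Proof.
move=> hA; rewrite /herm big_split_ord /=.
under eq_bigr do rewrite row_mxEl row_mxEl.
under [X in _ + X]eq_bigr do rewrite row_mxEr row_mxEr mxE big_distrl /=.
rewrite exchange_big -big_split /=; apply: eq_bigr => i _.
rewrite sqrD mulrDr; congr (_ + _).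
rewrite mxE sq_sum big_distrr /=; apply: eq_bigr => j _.
by rewrite (hA j i) exprMn -mulrA [A j i ^+ 2 * _]mulrC.
Qed.

Definition cmap K (A : 'M[F]_K) : 'Hom('rV[F]_K, 'rV[F]_(K + K)) :=
  linfun (mulmxr (row_mx 1%:M A)).

Lemma cmapE K (A : 'M[F]_K) m : cmap A m = row_mx m (m *m A).
Proof. by rewrite lfunE /= mul_mx_row mulmx1. Qed.

Definition code K (A : 'M[F]_K) : {vspace 'rV[F]_(K + K)} := limg (cmap A).

Lemma memC K (A : 'M[F]_K) x :
  reflect (exists m, x = row_mx m (m *m A)) (x \in code A).
Proof.
rewrite /code; apply: (iffP memv_imgP) => [[m _ ->]|[m ->]].
  by exists m; rewrite cmapE.
by exists m; rewrite ?memvf ?cmapE.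
Qed.

Lemma swap_row K (a b : 'rV[F]_K) : swap (row_mx a b) = row_mx b a.
Proof. by rewrite /swap row_mxKl row_mxKr. Qed.

Lemma dualP K (A : 'M[F]_K) (hA : hsym A) (y : 'rV[F]_(K + K)) :
  reflect (exists v, y = row_mx (v *m A) v) (y \in herm_dual (code A)).
Proof.
rewrite /herm_dual inE; apply: (iffP forallP).
  move=> h; exists (rsubmx y).
  rewrite -{1}(hsubmxK y); congr row_mx; apply/rowP => i.
  pose u : 'rV[F]_K := \row_j (j == i)%:R.
  have := h (row_mx u (u *m A)); rewrite (_ : _ \in _); last by apply/memC; exists u.
  rewrite -{1}(hsubmxK y) herm_row //= (bigD1 i) //= big1 => [|j /negbTE ne]; last first.
    by rewrite !mxE ne mul0r.
  rewrite !mxE eqxx mul1r addr0 expf_eq0 /= addr_eq0 => /eqP ->.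
  by rewrite oppr_pchar2.
move=> [v ->] x; apply/implyP => /memC [m ->].
rewrite herm_row // big1 // => i _.
by rewrite addrr_pchar2 // expr0n mulr0.
Qed.

Lemma code_main K (A : 'M[F]_K) d : hsym A -> lcdc A -> dlb d A -> dex d A ->
  herm_fsd_LCD_code (code A) K d.
Proof.
move=> hA hL hD [m0 m0nz hm0]; split; [|split; [|split]].
- rewrite /code limg_dim_eq ?dimvf ?dim_matrix; first exact: mul1n.
  rewrite capfv; apply/eqP; rewrite -subv0; apply/subvP => m.
  rewrite memv_ker memv0 cmapE row_mx_eq0 => /andP [] //.
- split.
    exists (row_mx m0 (m0 *m A)); first by apply/memC; exists m0.
    by rewrite row_mx_eq0 negb_and m0nz wt_row hm0.
  move=> x /memC [m ->]; rewrite row_mx_eq0 wt_row => nz; apply: hD.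
  by apply: contra nz => /eqP ->; rewrite mul0mx eqxx.
- move=> y /memC [m ->] /(dualP hA) [v] /eq_row_mx [e1 e2].
  have m0' : m = 0 by apply: hL; rewrite e2 e1.
  by rewrite m0' mul0mx row_mx0.
- move=> w; have dS y : (swap y \in code A) = (y \in herm_dual (code A)).
    apply/idP/idP => [/memC [m e] | /(dualP hA) [v e]].
      by apply/(dualP hA); exists m; rewrite -(swapK y) e swap_row.
    by apply/memC; exists v; rewrite e swap_row.
  set D := herm_dual (code A).
  rewrite -(card_imset _ (can_inj (@swapK K))) (can2_imset_pre _ (@swapK K) (@swapK K)).
  apply: eq_card => y; rewrite !inE wt_swap dS /herm_dual inE //.
Qed.


Lemma mul_blk K1 K2 (A1 : 'M[F]_K1) (A2 : 'M[F]_K2) (m1 : 'rV[F]_K1) (m2 : 'rV[F]_K2) :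
  row_mx m1 m2 *m block_mx A1 0 0 A2 = row_mx (m1 *m A1) (m2 *m A2).
Proof. by rewrite mul_row_block !mulmx0 addr0 add0r. Qed.

Lemma blk_good K1 K2 d (A1 : 'M[F]_K1) (A2 : 'M[F]_K2) :
  [/\ hsym A1, lcdc A1, dlb d A1 & dex d A1] ->
  [/\ hsym A2, lcdc A2, dlb d A2 & dex d A2] ->
  [/\ hsym (block_mx A1 0 0 A2), lcdc (block_mx A1 0 0 A2),
      dlb d (block_mx A1 0 0 A2) & dex d (block_mx A1 0 0 A2)].
Proof.
move=> [h1 l1 d1 [m0 m0nz e0]] [h2 l2 d2 _]; split.
- move=> i j.
  case: (split_ordP i) => i' ->; case: (split_ordP j) => j' ->.
  + by rewrite !block_mxEul h1.
  + by rewrite block_mxEdl block_mxEur !mxE expr0n.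
  + by rewrite block_mxEdl block_mxEur !mxE expr0n.
  + by rewrite !block_mxEdr h2.
- move=> m; rewrite -(hsubmxK m) !mul_blk => /eq_row_mx [e1 e2].
  by rewrite (l1 _ e1) (l2 _ e2) row_mx0.
- move=> m; rewrite -(hsubmxK m) mul_blk row_mx_eq0 negb_and !wt_row addnACA.
  case/orP => [/d1 h|/d2 h].
    exact: leq_trans h (leq_addr _ _).
  exact: leq_trans h (leq_addl _ _).
- exists (row_mx m0 0); first by rewrite row_mx_eq0 negb_and m0nz.
  by rewrite mul_blk mul0mx !wt_row !wt0 !addn0.
Qed.

Lemma copies k d (A0 : 'M[F]_k) :
  [/\ hsym A0, lcdc A0, dlb d A0 & dex d A0] ->
  forall t K, K = (k * t.+1)%N ->
  exists A : 'M[F]_K, [/\ hsym A, lcdc A, dlb d A & dex d A].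
Proof.
move=> g0; elim => [|t IH] K ->; first by rewrite muln1; exists A0.
have [A gA] := IH _ erefl.
rewrite mulnS; exists (block_mx A0 0 0 A); exact: blk_good.
Qed.

Lemma final k d (A0 : 'M[F]_k) :
  [/\ hsym A0, lcdc A0, dlb d A0 & dex d A0] ->
  forall t n, n = (k * t.+1 + k * t.+1)%N ->
  exists C : {vspace 'rV[F]_n}, herm_fsd_LCD_code C (k * t.+1) d.
Proof.
move=> g0 t n ->; have [A [a b c e]] := copies g0 (erefl (k * t.+1)%N).
by exists (code A); apply: code_main.
Qed.

End General.

Local Open Scope ring_scope.

Section Conc.
Variable F : finFieldType.
Hypothesis F2 : (2 \in [pchar F])%N.
Hypothesis HF : #|F| = 4%N.
Variable w : F.
Hypothesis w2 : w * w = 1 + w.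

Definition phi (a : nat) : F := match a with 0 => 0 | 1 => 1 | 2 => w | _ => 1 + w end.

Lemma xx (x : F) : x + x = 0. Proof. exact: addrr_pchar2 F2 x. Qed.

Lemma w_neq0 : w != 0.
Proof. by apply/eqP => h; move: w2; rewrite h mul0r addr0 => /esym/eqP; rewrite oner_eq0. Qed.

Lemma w1_neq0 : 1 + w != 0.
Proof.
apply/eqP => h; move: w2; rewrite h => /eqP; rewrite mulf_eq0 orbb.
by rewrite (negbTE w_neq0).
Qed.

Lemma phi0 a : (phi a == 0) = (a == 0%N).
Proof.
by case: a => [|[|[|a]]]; rewrite /= ?eqxx ?oner_eq0 ?(negbTE w_neq0) ?(negbTE w1_neq0).
Qed.

Lemma phi_n3 b : phi (n3 b) = phi b.
Proof. by case: b => [|[|[|b]]]. Qed.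

Lemma phi_add a b : phi (add4 a b) = phi a + phi b.
Proof.
case: a => [|[|[|a]]]; case: b => [|[|[|b]]];
  rewrite /= ?add0r ?addr0 ?xx //;
  first [ by rewrite addrA xx add0r | by rewrite addrC | by rewrite addrCA xx addr0
        | by rewrite addrAC xx add0r | by rewrite -addrA xx addr0 ].
Qed.

Lemma m23 : w * (1 + w) = 1.
Proof. by rewrite mulrDr mulr1 w2 addrCA xx addr0. Qed.
Lemma m32 : (1 + w) * w = 1.
Proof. by rewrite mulrC m23. Qed.
Lemma m33 : (1 + w) * (1 + w) = w.
Proof. by rewrite mulrDl mul1r m23 addrAC xx add0r. Qed.

Lemma phi_mul a b : phi (mul4 a b) = phi a * phi b.
Proof.
case: a => [|[|[|a]]]; case: b => [|[|[|b]]];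
  by rewrite /= ?mul0r ?mulr0 ?mul1r ?mulr1 ?w2 ?m23 ?m32 ?m33.
Qed.

Definition phiv k (l : seq nat) : 'rV[F]_k := \row_(i < k) phi (nth 0%N l i).
Definition phim k (L : seq (seq nat)) : 'M[F]_k := \matrix_(i < k, j < k) phi (ent L i j).

Lemma phi_dot k f g : phi (dot k f g) = \sum_(i < k) phi (f i) * phi (g i).
Proof.
rewrite /dot -(big_mkord xpredT (fun i => phi (f i) * phi (g i))) /index_iota subn0.
elim: (iota 0 k) => [|x s IH] /=; first by rewrite big_nil.
by rewrite big_cons phi_add phi_mul IH.
Qed.

Lemma phiv_mul k l L : phiv k l *m phim k L = phiv k (vmul k l L).
Proof.
apply/rowP => j; rewrite !mxE /vmul nth_mkseq // phi_dot.
by apply: eq_bigr => i _; rewrite !mxE.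
Qed.

Lemma phim_mul k L M : phim k L *m phim k M = phim k (mmul k L M).
Proof.
apply/matrixP => i j; rewrite !mxE /ent /mmul nth_mkseq // /vmul nth_mkseq // phi_dot.
by apply: eq_bigr => l _; rewrite !mxE.
Qed.

Lemma phim_add k L M : phim k L + phim k M = phim k (madd k L M).
Proof.
by apply/matrixP => i j; rewrite !mxE {3}/ent /madd nth_mkseq // nth_mkseq // phi_add.
Qed.

Lemma phim_I k : phim k (mI k) = 1%:M.
Proof.
apply/matrixP => i j; rewrite !mxE /ent /mI nth_mkseq // nth_mkseq //.
by case: eqP => [/val_inj -> | ne]; rewrite ?eqxx //; case: eqP => // e; case: ne; rewrite e.
Qed.

Lemma phi_inj a b : (a < 4)%N -> (b < 4)%N -> phi a = phi b -> a = b.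
Proof.
move=> ha hb e; have : phi (add4 a b) == 0 by rewrite phi_add e xx.
clear e.
rewrite phi0; move: ha hb.
by case: a => [|[|[|[|a]]]]; case: b => [|[|[|[|b]]]].
Qed.

Lemma phi_surj (x : F) : exists a, (a < 4)%N && (phi a == x).
Proof.
pose S := [set phi (val a) | a : 'I_4].
have cS : #|S| = 4%N.
  rewrite card_imset ?card_ord // => a b e; apply: val_inj; exact: phi_inj (ltn_ord a) (ltn_ord b) e.
have : x \in S by have -> : S = setT by apply/eqP; rewrite eqEcard subsetT cardsT HF cS.
by case/imsetP => a _ ->; exists (val a); rewrite ltn_ord eqxx.
Qed.

Lemma liftv k (v : 'rV[F]_k) :
  exists l, [/\ size l = k, all (fun a => a < 4)%N l & v = phiv k l].
Proof.
pose g x := xchoose (phi_surj x).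
have gP x : (g x < 4)%N && (phi (g x) == x) := xchooseP (phi_surj x).
exists [seq g (v 0 i) | i <- enum 'I_k]; split.
- by rewrite size_map size_enum_ord.
- by apply/allP => a /mapP [i _ ->]; case/andP: (gP (v 0 i)).
- apply/rowP => i; rewrite mxE (nth_map i) ?size_enum_ord // nth_ord_enum.
  by case/andP: (gP (v 0 i)) => _ /eqP ->.
Qed.

Lemma wt_phiv k l : size l = k -> wt (phiv k l) = count nz l.
Proof.
move=> sl; rewrite /wt -sum1dep_card -sum1_count (big_nth 0%N) big_mkord sl.
by apply: eq_bigl => i; rewrite mxE phi0.
Qed.

Lemma enumwP k r l : size l = k -> all (fun a => a < 4)%N l -> (count nz l <= r)%N ->
  l \in enumw k r.
Proof.
elim: k r l => [|k IH] r [|a l] //=.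
case=> sl /andP [ha al] hc; rewrite mem_cat.
case: a ha hc => [|a] ha hc.
  by rewrite map_f // IH.
case: r hc => [|r] hc; first by rewrite /nz /= in hc.
apply/orP; right; have hl : l \in enumw k r by apply: IH.
by move: ha; clear hc; case: a => [|[|[|a]]] // _; rewrite !mem_cat map_f ?orbT.
Qed.


Lemma mxx k (m : 'rV[F]_k) : m + m = 0.
Proof. by apply/rowP => i; rewrite !mxE xx. Qed.

Lemma hsym_ok k L : hchk k L -> hsym (phim k L).
Proof.
move=> /allP h i j.
have hi : (i : nat) \in iota 0 k by rewrite mem_iota ltn_ord.
have hj : (j : nat) \in iota 0 k by rewrite mem_iota ltn_ord.
have /eqP e := allP (h i hi) j hj.
by rewrite !mxE e phi_mul expr2.
Qed.

Lemma lcd_ok k L C : mmul k (madd k (mmul k L L) (mI k)) C = mI k -> lcdc (phim k L).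
Proof.
move=> e m hm.
have e' : (phim k L *m phim k L + 1%:M) *m phim k C = 1%:M.
  by rewrite phim_mul -{1}phim_I phim_add phim_mul e phim_I.
by rewrite -[m]mulmx1 -e' mulmxA mulmxDr mulmx1 !mulmxA hm mxx mul0mx.
Qed.

Lemma dlb_ok k d r L B : (d <= 2 * r.+1)%N -> mmul k L B = mI k ->
  all (chk k d L) (enumw k r) -> all (chk k d B) (enumw k r) -> dlb d (phim k L).
Proof.
move=> hd eB cA cB m mnz.
have [l [sl al ml]] := liftv m; subst m.
have cl : count nz l != 0%N.
  by apply: contra mnz => /eqP c; apply/eqP/wt_eq0; rewrite wt_phiv.
case: (leqP (count nz l) r) => h1.
  have := allP cA l (enumwP sl al h1); rewrite /chk (negbTE cl) /=.
  by rewrite phiv_mul !wt_phiv ?size_mkseq.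
have [l' [sl' al' e']] := liftv (phiv k l *m phim k L).
have eAB : phim k L *m phim k B = 1%:M by rewrite phim_mul eB phim_I.
have back : phiv k l = phiv k l' *m phim k B by rewrite -e' -mulmxA eAB mulmx1.
rewrite e'.
case: (leqP (count nz l') r) => h2.
  have := allP cB l' (enumwP sl' al' h2); rewrite /chk.
  case/orP => [/eqP c0 | hh].
    have z : phiv k l' = 0 by apply: wt_eq0; rewrite wt_phiv.
    by move: mnz; rewrite back z mul0mx eqxx.
  by rewrite addnC {1}back phiv_mul !wt_phiv ?size_mkseq.
rewrite !wt_phiv //; apply: leq_trans hd _.
by rewrite mul2n -addnn leq_add.
Qed.

Lemma dex_ok k d L l : size l = k -> count nz l != 0%N ->
  (count nz l + count nz (vmul k l L))%N = d -> dex d (phim k L).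
Proof.
move=> sl cl e; exists (phiv k l).
  by apply: contra cl => /eqP h; rewrite -(wt_phiv sl) h wt0.
by rewrite phiv_mul !wt_phiv ?size_mkseq.
Qed.

Lemma good_of k d r L B C l : allchk k d r L B C l ->
  [/\ hsym (phim k L), lcdc (phim k L), dlb d (phim k L) & dex d (phim k L)].
Proof.
case/and5P => hd hh /eqP eB /eqP eC /and5P [/eqP sl cl /eqP e cA cB].
split; [exact: hsym_ok | exact: lcd_ok eC | exact: dlb_ok hd eB cA cB | exact: dex_ok sl cl e].
Qed.

End Conc.

Definition A8 : seq (seq nat) := [:: [:: 0; 3; 3; 0; 1; 1; 2; 0]; [:: 2; 1; 1; 2; 2; 1; 3; 1]; [:: 2; 1; 1; 0; 0; 0; 1; 1]; [:: 0; 3; 0; 1; 3; 1; 3; 2]; [:: 1; 3; 0; 2; 0; 2; 3; 2]; [:: 1; 1; 0; 1; 3; 0; 3; 1]; [:: 3; 2; 1; 2; 2; 2; 1; 0]; [:: 0; 1; 1; 3; 3; 1; 0; 0]].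
Definition B8 : seq (seq nat) := [:: [:: 1; 1; 0; 2; 1; 0; 3; 1]; [:: 1; 0; 1; 2; 1; 0; 1; 3]; [:: 0; 1; 0; 0; 2; 2; 3; 3]; [:: 3; 3; 0; 0; 3; 2; 0; 1]; [:: 1; 1; 3; 2; 1; 3; 2; 3]; [:: 0; 0; 3; 3; 2; 1; 3; 0]; [:: 2; 1; 2; 0; 3; 2; 0; 2]; [:: 1; 2; 2; 1; 2; 0; 3; 0]].
Definition C8 : seq (seq nat) := [:: [:: 1; 0; 0; 3; 3; 2; 2; 2]; [:: 0; 1; 2; 3; 2; 0; 1; 2]; [:: 0; 3; 1; 1; 1; 1; 2; 0]; [:: 2; 2; 1; 0; 2; 0; 0; 2]; [:: 2; 3; 1; 3; 0; 1; 3; 3]; [:: 3; 0; 1; 0; 1; 0; 0; 1]; [:: 3; 1; 3; 0; 2; 0; 0; 3]; [:: 3; 3; 0; 3; 2; 1; 2; 1]].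
Definition w8 : seq nat := [:: 1; 0; 0; 0; 0; 0; 0; 0].
Definition A10 : seq (seq nat) := [:: [:: 1; 2; 1; 1; 3; 2; 0; 3; 3; 0]; [:: 3; 1; 1; 2; 0; 2; 3; 2; 2; 0]; [:: 1; 1; 1; 3; 3; 1; 3; 3; 1; 1]; [:: 1; 3; 2; 0; 3; 0; 2; 0; 3; 2]; [:: 2; 0; 2; 2; 1; 3; 3; 0; 3; 3]; [:: 3; 3; 1; 0; 2; 1; 3; 1; 1; 1]; [:: 0; 2; 2; 3; 2; 2; 0; 3; 1; 3]; [:: 2; 3; 2; 0; 0; 1; 2; 0; 2; 1]; [:: 2; 3; 1; 2; 2; 1; 1; 3; 0; 0]; [:: 0; 0; 1; 3; 2; 1; 2; 1; 0; 1]].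
Definition B10 : seq (seq nat) := [:: [:: 0; 3; 1; 2; 0; 3; 1; 2; 3; 0]; [:: 2; 1; 2; 0; 0; 0; 0; 3; 1; 1]; [:: 1; 3; 0; 3; 3; 2; 1; 3; 3; 1]; [:: 3; 0; 2; 0; 1; 1; 0; 1; 1; 1]; [:: 0; 0; 2; 1; 0; 1; 1; 3; 3; 1]; [:: 2; 0; 3; 1; 1; 0; 0; 1; 0; 3]; [:: 1; 0; 1; 0; 1; 0; 0; 3; 2; 1]; [:: 3; 2; 2; 1; 2; 1; 2; 1; 2; 0]; [:: 2; 1; 2; 1; 2; 0; 3; 3; 0; 0]; [:: 0; 1; 1; 1; 1; 2; 1; 0; 0; 0]].
Definition C10 : seq (seq nat) := [:: [:: 1; 0; 3; 3; 0; 0; 1; 1; 2; 1]; [:: 0; 1; 2; 0; 0; 1; 0; 2; 2; 0]; [:: 2; 3; 1; 3; 2; 2; 0; 0; 0; 0]; [:: 2; 0; 2; 1; 0; 0; 0; 3; 0; 1]; [:: 0; 0; 3; 0; 0; 3; 2; 1; 2; 2]; [:: 0; 1; 3; 0; 2; 1; 1; 0; 3; 1]; [:: 1; 0; 0; 0; 3; 1; 1; 1; 0; 1]; [:: 1; 3; 0; 2; 1; 0; 1; 1; 1; 3]; [:: 3; 3; 0; 0; 3; 2; 0; 1; 1; 0]; [:: 1; 0; 0; 1; 3; 1; 1; 2; 0; 0]].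
Definition w10 : seq nat := [:: 1; 2; 0; 0; 0; 0; 0; 0; 0; 0].
Definition A12 : seq (seq nat) := [:: [:: 0; 1; 1; 1; 1; 1; 1; 1; 1; 1; 1; 1]; [:: 1; 0; 2; 1; 1; 2; 3; 2; 3; 1; 1; 3]; [:: 1; 3; 0; 2; 1; 1; 2; 3; 2; 3; 1; 1]; [:: 1; 1; 3; 0; 2; 1; 1; 2; 3; 2; 3; 1]; [:: 1; 1; 1; 3; 0; 2; 1; 1; 2; 3; 2; 3]; [:: 1; 3; 1; 1; 3; 0; 2; 1; 1; 2; 3; 2]; [:: 1; 2; 3; 1; 1; 3; 0; 2; 1; 1; 2; 3]; [:: 1; 3; 2; 3; 1; 1; 3; 0; 2; 1; 1; 2]; [:: 1; 2; 3; 2; 3; 1; 1; 3; 0; 2; 1; 1]; [:: 1; 1; 2; 3; 2; 3; 1; 1; 3; 0; 2; 1]; [:: 1; 1; 1; 2; 3; 2; 3; 1; 1; 3; 0; 2]; [:: 1; 2; 1; 1; 2; 3; 2; 3; 1; 1; 3; 0]].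
Definition B12 : seq (seq nat) := [:: [:: 1; 1; 1; 1; 1; 1; 1; 1; 1; 1; 1; 1]; [:: 1; 1; 2; 1; 2; 2; 1; 1; 3; 3; 1; 3]; [:: 1; 3; 1; 2; 1; 2; 2; 1; 1; 3; 3; 1]; [:: 1; 1; 3; 1; 2; 1; 2; 2; 1; 1; 3; 3]; [:: 1; 3; 1; 3; 1; 2; 1; 2; 2; 1; 1; 3]; [:: 1; 3; 3; 1; 3; 1; 2; 1; 2; 2; 1; 1]; [:: 1; 1; 3; 3; 1; 3; 1; 2; 1; 2; 2; 1]; [:: 1; 1; 1; 3; 3; 1; 3; 1; 2; 1; 2; 2]; [:: 1; 2; 1; 1; 3; 3; 1; 3; 1; 2; 1; 2]; [:: 1; 2; 2; 1; 1; 3; 3; 1; 3; 1; 2; 1]; [:: 1; 1; 2; 2; 1; 1; 3; 3; 1; 3; 1; 2]; [:: 1; 2; 1; 2; 2; 1; 1; 3; 3; 1; 3; 1]].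
Definition C12 : seq (seq nat) := [:: [:: 1; 1; 1; 1; 1; 1; 1; 1; 1; 1; 1; 1]; [:: 1; 1; 2; 2; 0; 3; 0; 0; 2; 0; 3; 3]; [:: 1; 3; 1; 2; 2; 0; 3; 0; 0; 2; 0; 3]; [:: 1; 3; 3; 1; 2; 2; 0; 3; 0; 0; 2; 0]; [:: 1; 0; 3; 3; 1; 2; 2; 0; 3; 0; 0; 2]; [:: 1; 2; 0; 3; 3; 1; 2; 2; 0; 3; 0; 0]; [:: 1; 0; 2; 0; 3; 3; 1; 2; 2; 0; 3; 0]; [:: 1; 0; 0; 2; 0; 3; 3; 1; 2; 2; 0; 3]; [:: 1; 3; 0; 0; 2; 0; 3; 3; 1; 2; 2; 0]; [:: 1; 0; 3; 0; 0; 2; 0; 3; 3; 1; 2; 2]; [:: 1; 2; 0; 3; 0; 0; 2; 0; 3; 3; 1; 2]; [:: 1; 2; 2; 0; 3; 0; 0; 2; 0; 3; 3; 1]].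
Definition w12 : seq nat := [:: 0; 1; 0; 0; 0; 2; 0; 0; 0; 0; 0; 0].

Lemma c8 : allchk 8 6 2 A8 B8 C8 w8. Proof. vm_compute. reflexivity. Qed.
Lemma c10 : allchk 10 7 3 A10 B10 C10 w10. Proof. vm_compute. reflexivity. Qed.
Lemma c12 : allchk 12 8 3 A12 B12 C12 w12. Proof. vm_compute. reflexivity. Qed.

Lemma exw (F : finFieldType) : (2 \in [pchar F])%N -> #|F| = 4%N ->
  exists w : F, w * w = 1 + w.
Proof.
move=> F2 HF.
have : exists x : F, (x != 0) && (x != 1).
  apply/existsP; apply: contraT; rewrite negb_exists => /forallP h.
  have sub : [set: F] \subset [set 0; 1].
    apply/subsetP => x _; move: (h x); rewrite negb_and !negbK !inE.
    by case/orP => /eqP ->; rewrite eqxx ?orbT.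
  by have := subset_leq_card sub; rewrite cardsT HF cards2; case: (_ != _).
case=> w /andP [w0 w1]; exists w.
have h4 : w ^+ 4 = w by rewrite -{2}(expf_card w) HF.
have h3 : w ^+ 3 = 1 by apply: (mulfI w0); rewrite -exprS h4 mulr1.
have : (w - 1) * (w * w + w + 1) = 0.
  have -> : (w - 1) * (w * w + w + 1) = w ^+ 3 - 1 by ring.
  by rewrite h3 subrr.
move/eqP; rewrite mulf_eq0 subr_eq0 (negbTE w1) /= -addrA addr_eq0 => /eqP ->.
by rewrite (oppr_pchar2 F2) addrC.
Qed.

Theorem theorem8 (F : finFieldType) (HF : #|F| = 4%N) (s : nat) (hs : (1 <= s)%N) :
  (exists C : {vspace 'rV[F]_(32 * s)}, herm_fsd_LCD_code C (16 * s) 6) /\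
  (exists C : {vspace 'rV[F]_(40 * s)}, herm_fsd_LCD_code C (20 * s) 7) /\
  (exists C : {vspace 'rV[F]_(48 * s)}, herm_fsd_LCD_code C (24 * s) 8).
Proof.
have F2 : (2 \in [pchar F])%N by apply: (@card_finPcharP F 2 2) => //; rewrite HF.
have [w w2] := exw F2 HF.
have g8 := good_of F2 HF w2 c8.
have g10 := good_of F2 HF w2 c10.
have g12 := good_of F2 HF w2 c12.
case: s hs => [//|s] _.
split; [|split].
- rewrite (_ : (16 * s.+1)%N = (8 * (2 * s).+1.+1)%N); last by lia.
  by apply: (final F2 g8); lia.
- rewrite (_ : (20 * s.+1)%N = (10 * (2 * s).+1.+1)%N); last by lia.
  by apply: (final F2 g10); lia.
- rewrite (_ : (24 * s.+1)%N = (12 * (2 * s).+1.+1)%N); last by lia.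
  by apply: (final F2 g12); lia.
Qed.
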